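(* Let $n \ge 3$, let $x_1, \dots, x_n \in \mathbb{R}$ be pairwise distinct, and let $\theta \in \mathbb{H}$. Then $$q(\theta) = \overline{\,M_\theta^{-1}\!\left(\frac{1}{n}\sum_{j=1}^n M_\theta(x_j)\right)},$$ where $q(\theta) = \theta - n\,h(\theta)/h'(\theta)$ with $h(\theta) = \prod_{j=1}^n (x_j-\theta)$, and $M_\theta(\zeta) = \frac{\zeta-\theta}{\zeta-\overline{\theta}}$ with inverse $M_\theta^{-1}(\zeta) = \frac{\theta - \overline{\theta}\zeta}{1-\zeta}$.
   Context: $\mathbb{H} = \{\theta\in\mathbb{C}:\Im\theta>0\}$; $\overline{\cdot}$ denotes complex conjugation. For $\theta\in\mathbb{H}$, $M_\theta$ is a biholomorphic map from $\mathbb{H}$ onto the open unit disc. *)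

(* Defs.v *)
From HB Require Import structures.
From mathcomp Require Import all_boot all_order all_algebra.
From mathcomp Require Import complex.
From mathcomp Require Import reals.
Set Implicit Arguments. Unset Strict Implicit. Unset Printing Implicit Defensive.
Import Order.TTheory GRing.Theory Num.Theory.
Local Open Scope ring_scope.
Local Open Scope complex_scope.

Definition Mob (R : realType) (theta z : R[i]) : R[i] :=
  (z - theta) / (z - theta^*).

Definition Mobinv (R : realType) (theta z : R[i]) : R[i] :=
  (theta - theta^* * z) / (1 - z).

Definition hpoly (R : realType) (n : nat) (x : 'I_n -> R) : {poly R[i]} :=
  \prod_(j < n) ((x j)%:C%:P - 'X).

Definition qmap (R : realType) (n : nat) (x : 'I_n -> R) (theta : R[i]) : R[i] :=
  theta - n%:R * (hpoly x).[theta] / ((hpoly x)^`()).[theta].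

(* Main.v *)
Require Import Defs.
From HB Require Import structures.
From mathcomp Require Import all_boot all_order all_algebra.
From mathcomp Require Import complex.
From mathcomp Require Import reals.
From mathcomp Require Import ring lra.
Import Order.TTheory GRing.Theory Num.Theory.
Local Open Scope ring_scope.
Local Open Scope complex_scope.
Section S.
Variable R : realType.
Lemma deriv_prod_eval (I : Type) (r : seq I) (f : I -> R[i]) (t : R[i]) :
  (forall i, f i - t != 0) ->
  (\prod_(i <- r) ((f i)%:P - 'X))^`().[t] =
  - (\prod_(i <- r) (f i - t)) * \sum_(i <- r) (f i - t)^-1.
Proof.
move=> nz; elim: r => [|a r IH].
  by rewrite !big_nil derivC hornerC mulr0.
rewrite !big_cons derivM hornerD !hornerM IH derivB derivC derivX.
rewrite !hornerE.
have := nz a; set d := f a - t => dn.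
have -> : (\prod_(j <- r) ((f j)%:P - 'X)).[t] = \prod_(j <- r) (f j - t).
  by rewrite horner_prod; apply: eq_bigr => i _; rewrite !hornerE.
move: (\prod_(j <- r) (f j - t)) (\sum_(j <- r) (f j - t)^-1) => P Q.
have E : forall e P Q : R[i], e != 0 -> -1*P + e*(-P)*Q = -(e*P)*(e^-1+Q).
  by move=> e P0 Q0 en; field.
exact: E.
Qed.

Lemma Im_sum (I : Type) (r : seq I) (g : I -> R[i]) :
  complex.Im (\sum_(i <- r) g i) = \sum_(i <- r) complex.Im (g i).
Proof.
elim: r => [|a r IH]; first by rewrite !big_nil.
by rewrite !big_cons -IH; move: (g a) (\sum_(i <- r) g i) => [? ?] [? ?].
Qed.

Lemma sum_lt0 (I : Type) (r : seq I) (g : I -> R) :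
  r <> [::] -> (forall i, g i < 0) -> \sum_(i <- r) g i < 0.
Proof.
move=> + neg; elim: r => [//|a r IH _].
rewrite big_cons; case: r IH => [|b r] IH.
  by rewrite big_nil addr0.
have h1 : \sum_(i <- b :: r) g i < 0 by exact: IH.
have h2 := neg a; lra.
Qed.

Lemma Im_inv_conj (y : R) (t : R[i]) : 0 < complex.Im t -> complex.Im ((y%:C - t^*)^-1) < 0.
Proof.
case: t => a b /= hb.
simpc; rewrite oppr_lt0 divr_gt0 //.
by rewrite ltr_pwDr ?exprn_gt0 ?sqr_ge0.
Qed.

Lemma nz1 (y : R) (t : R[i]) : 0 < complex.Im t -> y%:C - t != 0.
Proof. case: t => a b /= hb; apply/eqP; simpc; move=> -[_ /eqP]; by rewrite oppr_eq0 gt_eqF. Qed.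
Lemma nz2 (y : R) (t : R[i]) : 0 < complex.Im t -> y%:C - t^* != 0.
Proof. case: t => a b /= hb; apply/eqP; simpc; move=> -[_ /eqP]; by rewrite gt_eqF. Qed.
Lemma nz3 (t : R[i]) : 0 < complex.Im t -> t - t^* != 0.
Proof. case: t => a b /= hb; apply/eqP; simpc; move=> -[/eqP]; by rewrite gt_eqF // ltr_pwDl // ltW. Qed.
Lemma conj_aux (y : R) (t : R[i]) : conjc ((y%:C - conjc t)^-1) = (y%:C - t)^-1.
Proof. rewrite conjc_inv; congr (_^-1); case: t => a b; by simpc. Qed.
End S.


Theorem mainTheorem6 (R : realType) (n : nat) (x : 'I_n -> R) (theta : R[i]) :
  (3 <= n)%N -> injective x -> 0 < complex.Im theta ->
  qmap x theta =
    (Mobinv theta (n%:R^-1 * \sum_(j < n) Mob theta (x j)%:C))^*.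
Proof.
move=> n3 _ hIm.
apply: (canRL conjCK).
rewrite /qmap /Mobinv /Mob.
set t := theta.
have hd : forall j, (fun j => (x j)%:C) j - t != 0 by move=> j; exact: nz1.
have hd2 : forall j : 'I_n, (x j)%:C - Num.conj t != 0 by move=> j; exact: nz2.
have hc : t - Num.conj t != 0 by exact: nz3.
have hn : (n%:R : R[i]) != 0 by rewrite pnatr_eq0 -lt0n (leq_trans _ n3).
set u := \sum_(j < n) ((x j)%:C - Num.conj t)^-1.
have hu : u != 0.
  apply/eqP => /(congr1 (@complex.Im R)); rewrite Im_sum /=; apply/eqP; rewrite lt_eqF //.
  apply: sum_lt0; last by move=> j; exact: Im_inv_conj.
  rewrite /index_enum /= -enumT; case: n n3 x {hd hd2 hn u} => [|m] //= _ _.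
  by rewrite enum_ordSl.
rewrite (@deriv_prod_eval R _ (index_enum 'I_n) (fun j => (x j)%:C) t hd).
have hP : \prod_(j < n) ((x j)%:C - t) != 0 by apply/prodf_neq0 => j _; exact: nz1.
have -> : (\prod_(j < n) ((x j)%:C%:P - 'X)).[t] = \prod_(j < n) ((x j)%:C - t).
  by rewrite horner_prod; apply: eq_bigr => i _; rewrite !hornerE.
set P := \prod_(j < n) _.
set s := \sum_(j < n) _.
have hs : s = Num.conj u.
  rewrite /u rmorph_sum; apply: eq_bigr => j _.
  by rewrite -conj_aux.
have -> : \sum_(j < n) ((x j)%:C - t) / ((x j)%:C - Num.conj t) = n%:R - (t - Num.conj t) * u.
  have -> : (n%:R : R[i]) = \sum_(j < n) (1 : R[i]) by rewrite sumr_const card_ord.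
  rewrite /u mulr_sumr -sumrB.
  apply: eq_bigr => j _.
  have := hd2 j; move: ((x j)%:C) => z hz; by field.
rewrite hs.
have hu' : Num.conj u != 0 by rewrite conjC_eq0.
have -> : t - n%:R * P / (- P * Num.conj u) = t + n%:R / Num.conj u.
  have hP' : P != 0 := hP.
  move: P hP' (Num.conj u) hu' => P0 hP0 v hv; field; by rewrite hv hP0.
rewrite rmorphD rmorphM fmorphV rmorph_nat /= conjCK.
move: (Num.conj t) hc => ct hc.
have -> : 1 - n%:R^-1 * (n%:R - (t - ct) * u) = (t - ct) * u / n%:R by field.
field; by rewrite hn hu hc.
Qed.
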